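(* Let $p\ge5$ be a prime. Every finite subgroup of $\mathrm{D}(p,\mathbb{C})$ that is invariant under conjugation by $\mathrm{Alt}(p)$ is invariant under conjugation by $\mathrm{Sym}(p)$.
   Context: $\mathrm{D}(p,\mathbb{C})$ is the group of invertible diagonal $p\times p$ matrices; $\mathrm{Sym}(p)$ is identified with the group of permutation matrices via $\alpha\mapsto[\delta_{i\alpha,j}]_{i,j}$, and $\mathrm{Alt}(p)$ with its subgroup of even permutations. *)

(* Defs.v *)
From mathcomp Require Import all_boot all_order all_algebra all_fingroup.
From mathcomp Require Import reals.
From mathcomp.real_closed Require Import complex.
Set Implicit Arguments. Unset Strict Implicit. Unset Printing Implicit Defensive.
Import GRing.Theory Num.Theory.
Local Open Scope ring_scope.

Definition is_invdiag (C : fieldType) (p : nat) (A : 'M[C]_p) : bool :=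
  is_diag_mx A && (A \in unitmx).

Definition finite_subgroup_of_diag (C : fieldType) (p : nat) (H : seq 'M[C]_p) : Prop :=
  [/\ (forall A, A \in H -> is_invdiag A),
      1%:M \in H,
      (forall A B, A \in H -> B \in H -> A *m B \in H) &
      (forall A, A \in H -> invmx A \in H)].

(* H is invariant under conjugation by the permutation matrix of s
   (perm_mx s = [delta_{s i, j}]_{i,j}). *)
Definition conj_invariant (C : fieldType) (p : nat) (H : seq 'M[C]_p) (s : 'S_p) : Prop :=
  forall A, A \in H -> invmx (perm_mx s) *m A *m perm_mx s \in H.

(* Main.v *)
Require Import Defs.
From mathcomp Require Import all_boot all_order all_algebra all_fingroup.
From mathcomp Require Import reals.
From mathcomp.real_closed Require Import complex.
Set Implicit Arguments. Unset Strict Implicit. Unset Printing Implicit Defensive.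
Import GRing.Theory.
From mathcomp Require Import ring zify.
Local Open Scope ring_scope.

Definition fc (C : fieldType) n (s : 'S_n.+1) (A : 'M[C]_n.+1) :=
  invmx (perm_mx s) *m A *m perm_mx s.

Lemma fcE (C : fieldType) n (s : 'S_n.+1) (A : 'M[C]_n.+1) i j :
  fc s A i j = A ((s^-1)%g i) ((s^-1)%g j).
Proof.
rewrite /fc.
have -> : invmx (perm_mx s) = perm_mx (s^-1)%g :> 'M[C]_n.+1.
  have hPQ : perm_mx s *m perm_mx (s^-1)%g = 1%:M :> 'M[C]_n.+1
    by rewrite -perm_mxM mulgV perm_mx1.
  by rewrite -[invmx _]mulmx1 -hPQ mulmxA mulVmx ?unitmx_perm // mul1mx.
by rewrite -row_permE -{2}[s](invgK) -col_permE !mxE.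
Qed.

Lemma fc_diag (C : fieldType) n (s : 'S_n.+1) (A : 'M[C]_n.+1) :
  is_diag_mx A -> is_diag_mx (fc s A).
Proof.
move=> /is_diag_mxP dA; apply/is_diag_mxP => i j nij; rewrite fcE dA //.
have : (s^-1)%g i != (s^-1)%g j by rewrite (inj_eq perm_inj).
by [].
Qed.

Lemma fcM (C : fieldType) n (t u : 'S_n.+1) (A : 'M[C]_n.+1) :
  fc u (fc t A) = fc (t * u)%g A.
Proof. by apply/matrixP => i j; rewrite !fcE invMg !permM. Qed.

Lemma mul_ii (C : fieldType) n (A B : 'M[C]_n.+1) i :
  is_diag_mx A -> (A *m B) i i = A i i * B i i.
Proof.
move=> /is_diag_mxP dA; rewrite mxE (bigD1 i) //= big1 ?addr0 // => k nki.
by rewrite dA ?mul0r // eq_sym.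
Qed.

Lemma eqdiag (C : fieldType) n (X Y : 'M[C]_n.+1) :
  is_diag_mx X -> is_diag_mx Y -> (forall i, X i i = Y i i) -> X = Y.
Proof.
move=> /is_diag_mxP dX /is_diag_mxP dY e; apply/matrixP => i j.
case: (eqVneq i j) => [->|nij]; first exact: e.
by rewrite dX ?dY.
Qed.

Section Main.
Variables (C : fieldType) (n : nat) (H : seq 'M[C]_n.+1).
Hypothesis HH : finite_subgroup_of_diag H.
Hypothesis Heven : forall s : 'S_n.+1, ~~ odd_perm s -> conj_invariant H s.

Lemma Hdiag A : A \in H -> is_diag_mx A.
Proof. by case: HH => h _ _ _ /h /andP[]. Qed.
Lemma Hunit A : A \in H -> A \in unitmx.
Proof. by case: HH => h _ _ _ /h /andP[]. Qed.
Lemma HM A B : A \in H -> B \in H -> A *m B \in H.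
Proof. by case: HH => _ _ h _; apply: h. Qed.
Lemma HV A : A \in H -> invmx A \in H.
Proof. by case: HH => _ _ _ h; apply: h. Qed.
Lemma Hev s A : ~~ odd_perm s -> A \in H -> fc s A \in H.
Proof. by move=> hs hA; apply: Heven. Qed.

Lemma Hmul A B i : A \in H -> (A *m B) i i = A i i * B i i.
Proof. by move=> hA; apply: mul_ii; apply: Hdiag. Qed.

Lemma Hinv_aux A i : A \in H -> A i i * invmx A i i = 1.
Proof.
move=> hA; rewrite -Hmul // mulmxV ?Hunit // mxE eqxx //.
Qed.

Lemma Hnz A i : A \in H -> A i i != 0.
Proof.
move=> hA; apply/eqP => h0; have := Hinv_aux i hA; rewrite h0 mul0r.
by move/eqP; rewrite eq_sym oner_eq0.
Qed.

Lemma Hinv A i : A \in H -> invmx A i i = (A i i)^-1.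
Proof.
move=> hA; have nz := Hnz i hA.
by rewrite -[invmx A i i](mulKf nz) Hinv_aux // mulr1.
Qed.

Lemma L_rep A (a b m : 'I_n.+1) : a != b -> b != m -> A \in H ->
  A b b = A m m -> fc (tperm a b) A \in H.
Proof.
move=> nab nbm hA ebm.
have -> : fc (tperm a b) A = fc ((tperm a b * tperm b m)^-1)%g A.
  apply: eqdiag; try by apply: fc_diag; apply: Hdiag.
  move=> i; rewrite !fcE invgK tpermV permM.
  case: (tpermP b m (tperm a b i)) => [->|->|] //.
apply: Hev => //.
by rewrite odd_permV odd_permM !odd_tperm nab nbm.
Qed.

Lemma L_t A (a b k l m : 'I_n.+1) :
  a != b -> a != k -> a != l -> a != m -> b != k -> b != l -> b != m ->
  k != l -> k != m -> l != m -> A \in H -> fc (tperm a b) A \in H.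
Proof.
move=> ab ak al am bk bl bm kl km lm hA.
set c1 := ((tperm a k * tperm k l)^-1)%g.
set c2 := ((tperm b k * tperm k l)^-1)%g.
have ev1 : ~~ odd_perm c1 by rewrite odd_permV odd_permM !odd_tperm ak kl.
have ev2 : ~~ odd_perm c2 by rewrite odd_permV odd_permM !odd_tperm bk kl.
set y1 := A *m invmx (fc c1 A).
set y2 := A *m invmx (fc c2 A).
have hy1 : y1 \in H by apply: HM => //; apply: HV; apply: Hev.
have hy2 : y2 \in H by apply: HM => //; apply: HV; apply: Hev.
have hc1 : forall j, fc c1 A \in H -> True by [].
have y1E j : y1 j j = A j j * (A (tperm k l (tperm a k j)) (tperm k l (tperm a k j)))^-1.
  by rewrite /y1 Hmul // Hinv ?fcE ?invgK ?permM //; apply: Hev.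
have y2E j : y2 j j = A j j * (A (tperm k l (tperm b k j)) (tperm k l (tperm b k j)))^-1.
  by rewrite /y2 Hmul // Hinv ?fcE ?invgK ?permM //; apply: Hev.
have nzA j : A j j != 0 by apply: Hnz.
have nsym (x y : 'I_n.+1) : x != y -> (y == x) = false by rewrite eq_sym => /negbTE.
have E := (negbTE ab, negbTE ak, negbTE al, negbTE am, negbTE bk, negbTE bl,
  negbTE bm, negbTE kl, negbTE km, negbTE lm, nsym _ _ ab, nsym _ _ ak,
  nsym _ _ al, nsym _ _ am, nsym _ _ bk, nsym _ _ bl, nsym _ _ bm,
  nsym _ _ kl, nsym _ _ km, nsym _ _ lm).
have hY1 : fc (tperm a b) y1 \in H.
  apply: (L_rep (m := m)) => //.
  by rewrite !y1E !permE /= ?eqxx ?E /= ?eqxx ?E /= !mulfV.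
have hY2 : fc (tperm a b) y2 \in H.
  rewrite tpermC; apply: (L_rep (m := m)) => //; first by rewrite eq_sym.
  by rewrite !y2E !permE /= ?eqxx ?E /= ?eqxx ?E /= !mulfV.
have -> : fc (tperm a b) A =
   A *m invmx y1 *m fc (tperm a b) y1 *m invmx y2 *m fc (tperm a b) y2.
  have hR : A *m invmx y1 *m fc (tperm a b) y1 *m invmx y2 *m fc (tperm a b) y2 \in H.
    by apply: HM => //; apply: HM => //; [apply: HM => //; apply: HM => //|]; apply: HV.
  apply: eqdiag; [by apply: fc_diag; apply: Hdiag | by apply: Hdiag |].
  move=> i.
  have h1 : A *m invmx y1 \in H by apply: HM => //; apply: HV.
  have h2 : A *m invmx y1 *m fc (tperm a b) y1 \in H by apply: HM.
  have h3 : A *m invmx y1 *m fc (tperm a b) y1 *m invmx y2 \in H by apply: HM => //; apply: HV.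
  rewrite (Hmul _ i h3) (Hmul _ i h2) (Hmul _ i h1) (Hmul _ i hA) !Hinv // !fcE tpermV.
  have n1 := Hnz i hy1; have n2 := Hnz i hy2.
  rewrite !y1E !y2E.
  case: (tpermP a b i) => [->|->|/eqP nia /eqP nib].
  - rewrite !permE /= ?eqxx ?E /= ?eqxx ?E /= ?eqxx ?E /=.
    by field; rewrite ?nzA ?oner_eq0.
  - rewrite !permE /= ?eqxx ?E /= ?eqxx ?E /= ?eqxx ?E /=.
    by field; rewrite ?nzA ?oner_eq0.
  - by field; rewrite ?nzA ?oner_eq0.
by apply: HM => //; apply: HM => //; [apply: HM => //; apply: HM => //|]; apply: HV.
Qed.
End Main.

Theorem proposition8p1 (R : realType) (p : nat) (Hp : prime p) (p5 : (5 <= p)%N)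
  (H : seq 'M[R[i]]_p) :
  finite_subgroup_of_diag H ->
  (forall s : 'S_p, ~~ odd_perm s -> conj_invariant H s) ->
  forall s : 'S_p, conj_invariant H s.
Proof.
move=> HH Hev.
have [q eq] : exists q, p = q.+4.+1.
  by exists (p - 5)%N; lia.
subst p.
pose a := Ordinal (isT : (0 < q.+4.+1)%N).
pose b := Ordinal (isT : (1 < q.+4.+1)%N).
pose k := Ordinal (isT : (2 < q.+4.+1)%N).
pose l := Ordinal (isT : (3 < q.+4.+1)%N).
pose m := Ordinal (isT : (4 < q.+4.+1)%N).
have ht : forall A, A \in H -> fc (tperm a b) A \in H.
  by move=> A hA; apply: (@L_t _ _ H HH Hev A a b k l m).
move=> s A hA.
case os: (odd_perm s); last by apply: Hev => //; rewrite os.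
change (fc s A \in H).
rewrite -(mulVKg (tperm a b) s) -fcM.
apply: Hev; last exact: ht.
by rewrite odd_permM odd_permV odd_tperm os.
Qed.
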